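(* For positive integers $r,n$, $$T(r,n):=\sum_{t\mid r}\frac{|\mu(t_{(n)})|}{\phi(t_{(n)})}\,\phi(t)=\gcd(r,n)\cdot W\big(\gcd(r,r_{(n)})\big).$$
   Context: For positive integers $a,b$, $a_{(b)}:=a/\gcd(a,b)$. $\mu$ is the Möbius function, $\phi$ is Euler's totient function, and $W(a)$ denotes the number of square-free divisors of the positive integer $a$. *)

(* Defs.v *)
From mathcomp Require Import all_boot all_order all_algebra.
Set Implicit Arguments. Unset Strict Implicit. Unset Printing Implicit Defensive.
Import Order.TTheory GRing.Theory Num.Theory.

(* a_(b) := a / gcd(a,b) *)
Definition quotg (a b : nat) : nat := a %/ gcdn a b.

(* n is squarefree: no prime appears with exponent >= 2 (n > 0 assumed) *)
Definition squarefree (n : nat) : bool := all (fun p => logn p n <= 1) (primes n).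

(* Moebius function (mu 0 := 0 by convention; unused) *)
Definition moebius (n : nat) : int :=
  if (0 < n) && squarefree n then ((-1) ^+ size (primes n))%R else 0%R.

Definition W (a : nat) : nat := count squarefree (divisors a).

(* Main.v *)
Require Import Defs.
From mathcomp Require Import all_boot all_order all_algebra.
From mathcomp Require Import zify ring.
Import Order.TTheory GRing.Theory Num.Theory.

Lemma cop_log u v p : coprime u v -> (logn p u == 0) || (logn p v == 0).
Proof.
move=> co; case: (posnP (logn p u)) => [//|]; case: (posnP (logn p v)) => [|]; first by rewrite orbT.
rewrite !logn_gt0 !mem_primes => /and3P[pp _ pv] /and3P[_ _ pu].
have: p %| gcdn u v by rewrite dvdn_gcd pu pv.
by rewrite (eqP co) dvdn1 => /eqP p1; rewrite p1 in pp.
Qed.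

Lemma gcdM u v n : coprime u v -> 0 < u -> 0 < v -> 0 < n ->
  gcdn (u * v) n = gcdn u n * gcdn v n.
Proof.
move=> co u0 v0 n0; have uv0 : 0 < u * v by rewrite muln_gt0 u0.
apply: eqn_from_log; rewrite ?muln_gt0 ?gcdn_gt0 ?uv0 ?u0 ?v0 //.
move=> p /=; rewrite lognM ?gcdn_gt0 ?u0 ?v0 // !logn_gcd //.
rewrite lognM //; move: (cop_log _ _ p co); lia.
Qed.

Lemma quotg_gt0 a n : 0 < a -> 0 < quotg a n.
Proof. by move=> a0; rewrite /quotg divn_gt0 ?gcdn_gt0 ?a0 // dvdn_leq // dvdn_gcdl. Qed.

Lemma logn_quotg p a n : 0 < a -> 0 < n ->
  logn p (quotg a n) = logn p a - minn (logn p a) (logn p n).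
Proof. by move=> a0 n0; rewrite /quotg logn_div ?dvdn_gcdl // logn_gcd. Qed.

Lemma quotgM u v n : coprime u v -> 0 < u -> 0 < v -> 0 < n ->
  quotg (u * v) n = quotg u n * quotg v n.
Proof.
move=> co u0 v0 n0; have uv0 : 0 < u * v by rewrite muln_gt0 u0.
apply: eqn_from_log; rewrite ?muln_gt0 ?quotg_gt0 //.
move=> p /=; rewrite lognM ?quotg_gt0 // !logn_quotg //.
rewrite lognM //; move: (cop_log _ _ p co); lia.
Qed.

Lemma quotg_dvd a n : quotg a n %| a.
Proof. by rewrite /quotg dvdn_div // dvdn_gcdl. Qed.

Lemma sqfP k : reflect (forall p, logn p k <= 1) (squarefree k).
Proof.
apply: (iffP allP) => H p; last by move=> _; apply: H.
case: (posnP (logn p k)) => [->//|]; rewrite logn_gt0 => /H //.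
Qed.

Lemma sqfM u v : coprime u v -> 0 < u -> 0 < v ->
  squarefree (u * v) = squarefree u && squarefree v.
Proof.
move=> co u0 v0; apply/sqfP/andP => [H|[/sqfP H1 /sqfP H2] p].
  by split; apply/sqfP => p; move: (H p); rewrite lognM //; lia.
by rewrite lognM //; move: (cop_log _ _ p co) (H1 p) (H2 p); lia.
Qed.

Lemma moebius_abs k : 0 < k -> (`|moebius k|%:~R : rat) = (squarefree k)%:R%R.
Proof.
move=> k0; rewrite /moebius k0 /=; case: (squarefree k) => /=.
  by rewrite normrX normrN1 expr1n.
by [].
Qed.

Local Open Scope ring_scope.

Lemma sum_div_mul (F : nat -> rat) u v : coprime u v -> (0 < u)%N -> (0 < v)%N ->
  (forall a b, (a %| u)%N -> (b %| v)%N -> F (a * b)%N = F a * F b) ->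
  \sum_(d <- divisors (u * v)) F d =
  (\sum_(a <- divisors u) F a) * \sum_(b <- divisors v) F b.
Proof.
move=> co u0 v0 FM; have uv0 : (0 < u * v)%N by rewrite muln_gt0 u0.
have pe : perm_eq (divisors (u * v)) [seq (a * b)%N | a <- divisors u, b <- divisors v].
  apply: uniq_perm; first exact: divisors_uniq.
    apply: allpairs_uniq; try exact: divisors_uniq.
    move=> [a1 b1] [a2 b2] /allpairsP[[x1 y1] /= [xi yi [-> ->]]].
    move=> /allpairsP[[x2 y2] /= [xi2 yi2 [-> ->]]] /= E.
    rewrite -!dvdn_divisors // in xi yi xi2 yi2.
    have h1 : forall x y, (x %| u)%N -> (y %| v)%N -> gcdn u (x * y) = x.
      move=> x y xu yv; rewrite Gauss_gcdl; first exact/gcdn_idPr.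
      exact: coprime_dvdr yv co.
    have h2 : forall x y, (x %| u)%N -> (y %| v)%N -> gcdn v (x * y) = y.
      move=> x y xu yv; rewrite mulnC Gauss_gcdl; first exact/gcdn_idPr.
      by apply: coprime_dvdr xu _; rewrite coprime_sym.
    have ex : x1 = x2 by rewrite -(h1 x1 y1) // E h1.
    have ey : y1 = y2 by rewrite -(h2 x1 y1) // E h2.
    by rewrite ex ey.
  move=> d; rewrite -dvdn_divisors //; apply/idP/allpairsP.
    move=> dd; have d0 : (0 < d)%N by apply: dvdn_gt0 dd.
    exists (gcdn d u, gcdn d v) => /=; rewrite -!dvdn_divisors // !dvdn_gcdr.
    split=> //; rewrite ![gcdn d _]gcdnC -gcdM //.
    by apply/esym/gcdn_idPr.
  move=> [[a b] /= [ai bi ->]]; rewrite -!dvdn_divisors // in ai bi.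
  exact: dvdn_mul.
rewrite (perm_big _ pe) /= big_allpairs_dep big_distrl /=.
apply: eq_big_seq => a ai; rewrite big_distrr /=; apply: eq_big_seq => b bi.
by rewrite FM // dvdn_divisors.
Qed.

Lemma mult_eq (G H : nat -> rat) :
  (forall u v, coprime u v -> (0 < u)%N -> (0 < v)%N -> G (u * v)%N = G u * G v) ->
  (forall u v, coprime u v -> (0 < u)%N -> (0 < v)%N -> H (u * v)%N = H u * H v) ->
  (forall p a, prime p -> G (p ^ a)%N = H (p ^ a)%N) ->
  forall r, (0 < r)%N -> G r = H r.
Proof.
move=> GM HM GHp r; elim: r {-2}r (leqnn r) => [|N IH] r Hr r0; first by lia.
case: (ltnP 1 r) => r1; last first.
  have -> : r = (2 ^ 0)%N by lia.
  exact: GHp.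
set p := pdiv r; have pp : prime p by apply: pdiv_prime.
have rE := partnC p r0.
rewrite -rE GM ?HM ?part_gt0 ?coprime_partC // p_part GHp //.
congr (_ * _); apply: IH; last exact: part_gt0.
have a0 : (0 < logn p r)%N by rewrite logn_gt0 mem_primes pp r0 pdiv_dvd.
have : (p ^ 1 <= p ^ logn p r)%N by rewrite leq_pexp2l // prime_gt0.
have := prime_gt1 pp; have := part_gt0 p^' r.
move: rE; rewrite p_part; nia.
Qed.

Lemma divisors_pexp p a : prime p ->
  perm_eq (divisors (p ^ a)) [seq (p ^ j)%N | j <- index_iota 0 a.+1].
Proof.
move=> pp; apply: uniq_perm; first exact: divisors_uniq.
  by rewrite map_inj_uniq ?iota_uniq //; apply: expnI; apply: prime_gt1.
move=> d; rewrite -dvdn_divisors ?expn_gt0 ?prime_gt0 //.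
apply/(dvdn_pfactor d a pp)/mapP => [[m ma ->]|[m mi ->]]; exists m => //.
  by rewrite mem_index_iota; lia.
by move: mi; rewrite mem_index_iota; lia.
Qed.

Lemma eq_pexp m p k : (0 < m)%N -> prime p ->
  (forall q, logn q m = k * (q == p))%N -> m = (p ^ k)%N.
Proof.
move=> m0 pp H; apply: eqn_from_log => //; first by rewrite expn_gt0 prime_gt0.
by move=> q /=; rewrite H lognX logn_prime.
Qed.

Lemma logn_pexp q p k : prime p -> logn q (p ^ k) = (k * (q == p))%N.
Proof. by move=> pp; rewrite lognX logn_prime. Qed.

Definition f (n d : nat) : rat :=
  (`|moebius (quotg d n)|%:~R : rat) / (totient (quotg d n))%:R * (totient d)%:R.

Lemma cop_quotg a b n : coprime a b -> coprime (quotg a n) (quotg b n).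
Proof.
move=> co; apply: coprime_dvdl (quotg_dvd a n) _.
exact: coprime_dvdr (quotg_dvd b n) co.
Qed.

Lemma f_mul n a b : (0 < n)%N -> coprime a b -> (0 < a)%N -> (0 < b)%N ->
  f n (a * b) = f n a * f n b.
Proof.
move=> n0 co a0 b0; have cq := cop_quotg _ _ n co.
rewrite /f quotgM // !moebius_abs ?quotg_gt0 ?muln_gt0 ?quotg_gt0 ?a0 //.
rewrite sqfM ?quotg_gt0 // -mulnb !totient_coprime // !natrM invfM.
ring.
Qed.

Lemma Wsum a : ((W a)%:R : rat) = \sum_(d <- divisors a) (squarefree d)%:R.
Proof.
rewrite /W -sum1_count natr_sum big_mkcond /=.
by apply: eq_bigr => d _; case: (squarefree d).
Qed.

Lemma WM u v : coprime u v -> (0 < u)%N -> (0 < v)%N ->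
  ((W (u * v))%:R : rat) = (W u)%:R * (W v)%:R.
Proof.
move=> co u0 v0; rewrite !Wsum; apply: sum_div_mul => // a b au bv.
have a0 := dvdn_gt0 u0 au; have b0 := dvdn_gt0 v0 bv.
rewrite sqfM //; last by apply: coprime_dvdl au _; apply: coprime_dvdr bv co.
by case: (squarefree a); case: (squarefree b); rewrite /= ?mul1r ?mul0r.
Qed.

Definition sg (n r : nat) := gcdn r (quotg r n).

Lemma logn_sg q n r : (0 < n)%N -> (0 < r)%N ->
  logn q (sg n r) = (logn q r - minn (logn q r) (logn q n))%N.
Proof.
move=> n0 r0; rewrite /sg logn_gcd ?quotg_gt0 // logn_quotg //; lia.
Qed.

Lemma sg_gt0 n r : (0 < r)%N -> (0 < sg n r)%N.
Proof. by move=> r0; rewrite /sg gcdn_gt0 r0. Qed.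

Lemma sgM n u v : (0 < n)%N -> coprime u v -> (0 < u)%N -> (0 < v)%N ->
  sg n (u * v) = (sg n u * sg n v)%N.
Proof.
move=> n0 co u0 v0; have uv0 : (0 < u * v)%N by rewrite muln_gt0 u0.
apply: eqn_from_log; rewrite ?muln_gt0 ?sg_gt0 //.
move=> p /=; rewrite lognM ?sg_gt0 // !logn_sg // lognM //.
move: (cop_log _ _ p co); lia.
Qed.

Lemma quotg_pexp p j n : prime p -> (0 < n)%N ->
  quotg (p ^ j) n = (p ^ (j - minn j (logn p n)))%N.
Proof.
move=> pp n0; apply: eq_pexp => //; first by rewrite quotg_gt0 // expn_gt0 prime_gt0.
have pj0 : (0 < p ^ j)%N by rewrite expn_gt0 prime_gt0.
move=> q; rewrite logn_quotg // logn_pexp //.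
by case: eqP => [->|]; lia.
Qed.

Lemma sqf_pexp p j : prime p -> squarefree (p ^ j) = (j <= 1)%N.
Proof.
move=> pp; apply/sqfP/idP => [H|H q].
  by move: (H p); rewrite pfactorK.
by rewrite logn_pexp //; case: (q == p); lia.
Qed.

Lemma sqf1 : squarefree 1.
Proof. by apply/sqfP => q; rewrite logn1. Qed.

Lemma f_pexp n p j : (0 < n)%N -> prime p ->
  f n (p ^ j) = (if (j <= logn p n)%N then totient (p ^ j)
                 else if j == (logn p n).+1 then (p ^ logn p n)%N else 0%N)%:R.
Proof.
move=> n0 pp; rewrite /f quotg_pexp // moebius_abs ?expn_gt0 ?prime_gt0 //.
set b := logn p n.
case: (leqP j b) => jb.
  have t1 : totient 1 = 1%N by [].
  by rewrite subnn expn0 sqf1 t1 /= divr1 mul1r.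
case: (eqVneq j b.+1) => [->|jb1].
  have -> : (b.+1 - b = 1)%N by lia.
  have sp : squarefree p by rewrite -[p]expn1 sqf_pexp.
  rewrite expn1 sp totient_prime // totient_pfactor //= mul1r.
  have p1 : p.-1 != 0%N by move: (prime_gt1 pp); lia.
  rewrite natrM mulrA mulVf ?mul1r // pnatr_eq0 //.
rewrite sqf_pexp //; have -> : (j - b <= 1)%N = false by lia.
by rewrite /= mul0r mul0r.
Qed.

Lemma W_pexp p e : prime p -> W (p ^ e) = (if e == 0%N then 1 else 2)%N.
Proof.
move=> pp; rewrite /W (permP (divisors_pexp p e pp)) count_map.
rewrite (@eq_count _ _ (fun j => j <= 1)%N); last by move=> j /=; rewrite sqf_pexp.
rewrite /index_iota subn0; case: e => [|e] //.
have -> : e.+2 = (2 + e)%N by lia.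
rewrite (iotaD 0 2 e) count_cat /=.
rewrite (@eq_in_count _ _ pred0) ?count_pred0 // => j; rewrite mem_iota => h /=; apply/negbTE; lia.
Qed.

Lemma sum_pexp n p a : (0 < n)%N -> prime p ->
  (\sum_(0 <= j < a.+1) (if (j <= logn p n)%N then totient (p ^ j)
                 else if j == (logn p n).+1 then (p ^ logn p n)%N else 0%N))%N
  = (p ^ minn a (logn p n) * (if (logn p n < a)%N then 2 else 1))%N.
Proof.
move=> n0 pp; set b := logn p n; clearbody b; have p1 := prime_gt1 pp.
elim: a => [|a IH]; first by rewrite big_nat1 min0n /=.
rewrite big_nat_recr //= IH.
case: (boolP (a.+1 <= b)%N) => h.
  have -> : minn a b = a by lia.
  have -> : minn a.+1 b = a.+1 by lia.
  have -> : (b < a)%N = false by lia.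
  have -> : (b < a.+1)%N = false by lia.
  rewrite totient_pfactor //= expnS; nia.
case: (boolP (a == b)) => [/eqP eab|nab].
  rewrite -eab eqxx ltnn /=; have -> : minn a.+1 a = a by lia.
  have -> : minn a a = a by lia.
  rewrite ltnSn; lia.
have -> : (a.+1 == b.+1) = false by apply/eqP; lia.
have -> : minn a.+1 b = minn a b by lia.
have -> : (b < a.+1)%N = (b < a)%N by lia.
by rewrite addn0.
Qed.

Theorem lemma2p4 (r n : nat) (hr : (0 < r)%N) (hn : (0 < n)%N) :
  \sum_(t <- divisors r)
     ((`|moebius (quotg t n)|%:~R : rat) / (totient (quotg t n))%:R * (totient t)%:R)
  = ((gcdn r n * W (gcdn r (quotg r n)))%N)%:R.
Proof.
pose G := fun r => \sum_(t <- divisors r) f n t.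
pose H := fun r : nat => ((gcdn r n * W (sg n r))%N)%:R : rat.
have E : G r = H r; last exact: E.
apply: mult_eq => //.
- move=> u v co u0 v0; rewrite /G; apply: sum_div_mul => // a b au bv.
  have a0 := dvdn_gt0 u0 au; have b0 := dvdn_gt0 v0 bv.
  apply: f_mul => //; apply: coprime_dvdl au _; exact: coprime_dvdr bv co.
- move=> u v co u0 v0; rewrite /H gcdM // sgM // !natrM WM ?sg_gt0 //; first ring.
  apply: coprime_dvdl (dvdn_gcdl _ _) _; exact: coprime_dvdr (dvdn_gcdl _ _) co.
- move=> p a pp; rewrite /G /H (perm_big _ (divisors_pexp p a pp)) big_map.
  rewrite (eq_bigr _ (fun j _ => f_pexp n p j hn pp)) -natr_sum sum_pexp //.
  set b := logn p n.
  have pa0 : (0 < p ^ a)%N by rewrite expn_gt0 prime_gt0.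
  have -> : gcdn (p ^ a) n = (p ^ minn a b)%N.
    apply: eq_pexp => //; first by rewrite gcdn_gt0 pa0.
    by move=> q; rewrite logn_gcd // logn_pexp //; case: eqP => [->|]; lia.
  have -> : sg n (p ^ a) = (p ^ (a - minn a b))%N.
    apply: eq_pexp => //; first by rewrite sg_gt0.
    by move=> q; rewrite logn_sg // logn_pexp //; case: eqP => [->|]; lia.
  rewrite W_pexp //; case: (boolP (b < a)%N) => h.
    by have -> : ((a - minn a b)%N == 0%N) = false by apply/eqP; lia.
  by have -> : ((a - minn a b)%N == 0%N) = true by apply/eqP; lia.
Qed.
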